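(* Let $X=\{x,y,z\}$ and $U=\{u,v,w\}$ be distinct three-element subsets of $\Sigma^+$ such that $X^*$ and $U^*$ are $3$-maximal, $Z=X\cup U$, and let $g,h:A^*\to\Sigma^*$ (with $A=\{\mathbf a,\mathbf b,\mathbf c\}$) be the morphisms $g(\mathbf a)=x,g(\mathbf b)=y,g(\mathbf c)=z$, $h(\mathbf a)=u,h(\mathbf b)=v,h(\mathbf c)=w$. Assume that $g$ is $Z$-marked. If $(\mathbf r,\mathbf s)$ and $(\mathbf r',\mathbf s')$ are two distinct minimal solutions of $C(g,h)$, then, with $\mathbf u=\mathbf r\wedge\mathbf r'$ and $\mathbf v=\mathbf s\wedge\mathbf s'$, there is a word $o$ with $g(\mathbf u)=h(\mathbf v)o$ which is a critical overflow on $(\mathbf u,\mathbf v)$. Moreover, $h$ is $Z$-marked if and only if $o$ is the empty word.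
   Context: $\Sigma^*$ is the free monoid over a countable alphabet $\Sigma$. A submonoid of rank (cardinality of minimal generating set) at most $k$ is $k$-maximal if it is not properly contained in any submonoid of $\Sigma^*$ of rank at most $k$. $\mathbf p\wedge\mathbf q$ denotes the longest common prefix of two words. The free hull of $Z$ is the smallest free submonoid of $\Sigma^*$ containing $Z$, with basis $\mathrm{FB}(Z)$; for $w$ in it, $w=b_1\cdots b_n$ uniquely with $b_i\in\mathrm{FB}(Z)$ and $\mathrm{first}_Z(w)=b_1$. A morphism $f:A^*\to\Sigma^*$ with images in the free hull is $Z$-marked if $\mathrm{first}_Z(f(\mathbf a_1))\neq\mathrm{first}_Z(f(\mathbf a_2))$ for distinct letters $\mathbf a_1,\mathbf a_2$. $C(g,h)=\{(\mathbf r,\mathbf s)\in A^+\times A^+: g(\mathbf r)=h(\mathbf s)\}$; a solution $(\mathbf r,\mathbf s)$ is minimal if there is no solution $(\mathbf p,\mathbf q)$ with $\mathbf p$ a proper prefix of $\mathbf r$ and $\mathbf q$ a proper prefix of $\mathbf s$. For a word $\mathbf t$, $\mathrm{first}(\mathbf t)$ is its first letter. A word $o\in\Sigma^*$ is a critical overflow on $(\mathbf u,\mathbf v)\in A^*\times A^*$ if $g(\mathbf u)=h(\mathbf v)o$ and there exist $\mathbf u_1,\mathbf u_2,\mathbf v_1,\mathbf v_2\in A^*$ with $\mathrm{first}(\mathbf u_1)\neq\mathrm{first}(\mathbf u_2)$, $\mathrm{first}(\mathbf v_1)\neq\mathrm{first}(\mathbf v_2)$, $g(\mathbf u\mathbf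 u_1)=h(\mathbf v\mathbf v_1)$ and $g(\mathbf u\mathbf u_2)=h(\mathbf v\mathbf v_2)$. *)

(* Defs.v *)
From mathcomp Require Import all_boot.
Set Implicit Arguments. Unset Strict Implicit. Unset Printing Implicit Defensive.

Section Words.
Variable S : eqType.

Definition gen (G : seq (seq S)) (w : seq S) : Prop :=
  exists ws : seq (seq S), all (fun t => t \in G) ws /\ flatten ws = w.

Definition rank_le (k : nat) (M : seq S -> Prop) : Prop :=
  exists G : seq (seq S), size G <= k /\ forall w, M w <-> gen G w.

Definition k_maximal (k : nat) (M : seq S -> Prop) : Prop :=
  rank_le k M /\
  forall G : seq (seq S), size G <= k ->
    (forall w, M w -> gen G w) -> (forall w, gen G w -> M w).

Definition submonoid (M : seq S -> Prop) : Prop :=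
  M [::] /\ forall u v, M u -> M v -> M (u ++ v).

Definition basis (M : seq S -> Prop) (w : seq S) : Prop :=
  M w /\ w <> [::] /\
  forall u v, M u -> M v -> u ++ v = w -> u = [::] \/ v = [::].

Definition free_submonoid (M : seq S -> Prop) : Prop :=
  submonoid M /\
  forall ws1 ws2 : seq (seq S),
    (forall t, t \in ws1 -> basis M t) -> (forall t, t \in ws2 -> basis M t) ->
    flatten ws1 = flatten ws2 -> ws1 = ws2.

Definition free_hull (Z : seq S -> Prop) (w : seq S) : Prop :=
  forall M, free_submonoid M -> (forall z, Z z -> M z) -> M w.

Definition FB (Z : seq S -> Prop) : seq S -> Prop := basis (free_hull Z).

Definition is_first (Z : seq S -> Prop) (w b : seq S) : Prop :=
  exists ws : seq (seq S),
    FB Z b /\ (forall t, t \in ws -> FB Z t) /\ flatten (b :: ws) = w.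

End Words.

Definition morph (A : Type) (S : Type) (f : A -> seq S) (r : seq A) : seq S :=
  flatten (map f r).

Definition marked (A : eqType) (S : eqType) (Z : seq S -> Prop)
  (f : A -> seq S) : Prop :=
  (forall a, free_hull Z (f a)) /\
  forall a1 a2 : A, a1 != a2 -> forall b1 b2,
    is_first Z (f a1) b1 -> is_first Z (f a2) b2 -> b1 <> b2.

Definition solution (A : Type) (S : Type) (g h : A -> seq S) (r s : seq A) :=
  r <> [::] /\ s <> [::] /\ morph g r = morph h s.

Definition proper_prefix (A : eqType) (p r : seq A) : bool :=
  prefix p r && (size p < size r).

Definition minimal_solution (A : eqType) (S : Type) (g h : A -> seq S)
  (r s : seq A) : Prop :=
  solution g h r s /\
  ~ (exists p q, proper_prefix p r /\ proper_prefix q s /\ solution g h p q).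

Fixpoint lcp (A : eqType) (u v : seq A) : seq A :=
  match u, v with
  | x :: u', y :: v' => if x == y then x :: lcp u' v' else [::]
  | _, _ => [::]
  end.

Definition first (A : Type) (t : seq A) : option A := ohead t.

Definition critical_overflow (A : eqType) (S : Type) (g h : A -> seq S)
  (o : seq S) (u v : seq A) : Prop :=
  morph g u = morph h v ++ o /\
  exists u1 u2 v1 v2 : seq A,
    first u1 <> first u2 /\ first v1 <> first v2 /\
    morph g (u ++ u1) = morph h (v ++ v1) /\
    morph g (u ++ u2) = morph h (v ++ v2).

(* Main.v *)
Require Import Defs.
From mathcomp Require Import all_boot.
From Stdlib Require Import Classical.
Set Implicit Arguments. Unset Strict Implicit. Unset Printing Implicit Defensive.


Section Gen.
Variable S : eqType.
Implicit Types (x y u v w : seq S) (M : seq S -> Prop).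

Lemma cancel_l (T : Type) (x y z : seq T) : x ++ y = x ++ z -> y = z.
Proof. by elim: x => //= a x IH [] /IH. Qed.

Lemma cat_split (T : Type) (x y x' y' : seq T) : x ++ y = x' ++ y' ->
  (exists t, x' = x ++ t /\ y = t ++ y') \/ (exists t, x = x' ++ t /\ y' = t ++ y).
Proof.
elim: x x' => [|a x IH] x' /=.
  by move=> ->; left; exists x'.
case: x' => [|b x'] /=.
  by move=> <-; right; exists (a :: x).
case=> -> /IH [[t [-> ->]]|[t [-> ->]]]; [left|right]; by exists t.
Qed.

Definition stable M := forall u v w, M u -> M (u ++ v) -> M w -> M (v ++ w) -> M v.

Lemma sub_flatten M ws : submonoid M -> (forall t, t \in ws -> M t) -> M (flatten ws).
Proof.
move=> [M0 MC]; elim: ws => //= t ws IH H; apply: MC; first by apply: H; rewrite inE eqxx.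
by apply: IH => z zin; apply: H; rewrite inE zin orbT.
Qed.

Lemma basis_nil M : ~ basis M [::].
Proof. by move=> [_ []]. Qed.

Lemma factor_exists M w : submonoid M -> M w ->
  exists ws, (forall t, t \in ws -> basis M t) /\ flatten ws = w.
Proof.
move=> sM; move: {2}(size w) (leqnn (size w)) => n; elim: n w => [|n IH] w.
  by rewrite leqn0 => /nilP -> _; exists [::].
move=> Hs Mw; case: (classic (basis M w)) => Bw.
  exists [:: w]; split => [t|]; last by rewrite /= cats0.
  by rewrite inE => /eqP ->.
case: (classic (w = [::])) => [->|wn]; first by exists [::].
have: exists u v, M u /\ M v /\ u ++ v = w /\ u <> [::] /\ v <> [::].
  apply: NNPP => Hn; apply: Bw; split=> //; split=> // u v Mu Mv uv.
  apply: NNPP => H2; apply: Hn; exists u, v; do 3!split=> //.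
  by split=> H3; apply: H2; [left|right].
move=> [u [v [Mu [Mv [uv [un vn]]]]]].
have su : size u <= n.
  rewrite -ltnS; apply: leq_trans Hs; rewrite -uv size_cat -addn1 leq_add2l.
  by rewrite lt0n size_eq0; apply/eqP.
have sv : size v <= n.
  rewrite -ltnS; apply: leq_trans Hs; rewrite -uv size_cat -add1n leq_add2r.
  by rewrite lt0n size_eq0; apply/eqP.
move: (IH u su Mu) (IH v sv Mv) => [wu [Bu Fu]] [wv [Bv Fv]].
exists (wu ++ wv); split; last by rewrite flatten_cat Fu Fv.
by move=> t; rewrite mem_cat => /orP [/Bu|/Bv].
Qed.

Lemma flatten_basis_nil M ws : (forall t, t \in ws -> basis M t) -> flatten ws = [::] -> ws = [::].
Proof.
case: ws => //= t ws H; have := H t; rewrite inE eqxx => /(_ isT) [_ [tn _]].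
by case: t tn H.
Qed.

Lemma stable_free M : submonoid M -> stable M -> free_submonoid M.
Proof.
move=> sM stM; split=> // ws1; elim: ws1 => [|x ws1 IH] ws2 B1 B2 /=.
  by move/esym/(flatten_basis_nil B2).
case: ws2 B2 => [|y ws2] B2 /=.
  by move/(flatten_basis_nil B1).
have Bx : basis M x by apply: B1; rewrite inE eqxx.
have By : basis M y by apply: B2; rewrite inE eqxx.
have F1 : M (flatten ws1).
  by apply: sub_flatten => // t tin; case: (B1 t); rewrite // inE tin orbT.
have F2 : M (flatten ws2).
  by apply: sub_flatten => // t tin; case: (B2 t); rewrite // inE tin orbT.
move=> E; have Exy : x = y.
  case: (cat_split E) => [[t [ey et]]|[t [ex et]]].
  - have Mt : M t.
      apply: (stM x t (flatten ws2)) => //; first by case: Bx.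
        by rewrite -ey; case: By.
      by rewrite -et.
    case: By => _ [_ /(_ x t)]; case: Bx => Mx [xn _].
    by move=> /(_ Mx Mt (esym ey)) [//|tn]; rewrite ey tn cats0.
  - have Mt : M t.
      apply: (stM y t (flatten ws1)) => //; first by case: By.
        by rewrite -ex; case: Bx.
      by rewrite -et.
    case: Bx => _ [_ /(_ y t)]; case: By => My [yn _].
    by move=> /(_ My Mt (esym ex)) [//|tn]; rewrite ex tn cats0.
subst y; congr (_ :: _); apply: IH.
- by move=> t tin; apply: B1; rewrite inE tin orbT.
- by move=> t tin; apply: B2; rewrite inE tin orbT.
- exact: cancel_l E.
Qed.

Lemma prefix_basis M A B C D : (forall t, t \in A ++ B -> basis M t) ->
  A ++ B = C ++ D -> size (flatten A) <= size (flatten C) ->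
  exists E, C = A ++ E.
Proof.
move=> BA /cat_split [[t [-> _]]|[t [eA _]]]; first by exists t.
subst A; rewrite flatten_cat size_cat -{2}(addn0 (size (flatten C))) leq_add2l leqn0.
move/nilP => ft.
have tn : t = [::].
  apply: (flatten_basis_nil (M:=M)) ft => z zin; apply: BA.
  by rewrite mem_cat mem_cat zin orbT.
by exists [::]; rewrite tn !cats0.
Qed.

Lemma free_stable M : free_submonoid M -> stable M.
Proof.
move=> [sM uniq] u v w Mu Muv Mw Mvw.
move: (factor_exists sM Mu) (factor_exists sM Muv) (factor_exists sM Mw)
  (factor_exists sM Mvw) => [fu [Bu Fu]] [fuv [Buv Fuv]] [fw [Bw Fw]] [fvw [Bvw Fvw]].
have E : fu ++ fvw = fuv ++ fw.
  apply: uniq; try (by move=> t; rewrite mem_cat => /orP []; auto).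
  by rewrite !flatten_cat Fu Fvw Fuv Fw catA.
have [E' eE] : exists E, fuv = fu ++ E.
  apply: (@prefix_basis M _ fvw _ fw) => //.
    by move=> t; rewrite mem_cat => /orP []; auto.
  by rewrite Fu Fuv size_cat leq_addr.
have : flatten E' = v.
  by apply: (@cancel_l _ u); rewrite -Fuv eE flatten_cat Fu.
move=> <-; apply: sub_flatten => // t tin; case: (Buv t) => //.
by rewrite eE mem_cat tin orbT.
Qed.

End Gen.

Section Hull.
Variable S : eqType.
Variable Z : seq S -> Prop.
Local Notation H := (free_hull Z).

Lemma hull_sub : submonoid H.
Proof.
split; first by move=> M [[M0 _] _].
by move=> u v Hu Hv M fM ZM; case: (fM) => [[_ MC] _]; apply: MC; [apply: Hu|apply: Hv].
Qed.

Lemma hull_Z z : Z z -> H z.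
Proof. by move=> Zz M _ /(_ z Zz). Qed.

Lemma hull_stable : stable H.
Proof.
move=> u v w Hu Huv Hw Hvw M fM ZM.
by apply: (free_stable fM (u:=u) (w:=w)); [apply: Hu|apply: Huv|apply: Hw|apply: Hvw].
Qed.

Lemma hull_free : free_submonoid H.
Proof. exact: stable_free hull_sub hull_stable. Qed.

Lemma first_uniq w b b' : is_first Z w b -> is_first Z w b' -> b = b'.
Proof.
move=> [ws [Fb [Fws E]]] [ws' [Fb' [Fws' E']]].
have : b :: ws = b' :: ws'.
  case: hull_free => _; apply.
  - by move=> t; rewrite inE => /orP [/eqP -> //|]; apply: Fws.
  - by move=> t; rewrite inE => /orP [/eqP -> //|]; apply: Fws'.
  by rewrite E E'.
by case.
Qed.

Lemma first_exists w : H w -> w <> [::] -> exists b, is_first Z w b.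
Proof.
move=> Hw wn; case: (factor_exists hull_sub Hw) => [[|b ws] [B F]].
  by rewrite -F in wn.
exists b, ws; split; first by apply: B; rewrite inE eqxx.
by split=> // t tin; apply: B; rewrite inE tin orbT.
Qed.

Lemma first_cat x y b : is_first Z x b -> H y -> is_first Z (x ++ y) b.
Proof.
move=> [ws [Fb [Fws E]]] Hy; case: (factor_exists hull_sub Hy) => [wy [B F]].
exists (ws ++ wy); split=> //; split.
  by move=> t; rewrite mem_cat => /orP []; [apply: Fws|apply: B].
by rewrite -E -F /= flatten_cat catA.
Qed.

Lemma first_self y : FB Z y -> is_first Z y y.
Proof.
move=> Fy; exists [::]; split; first exact: Fy.
by split; [move=> t|rewrite /= cats0].
Qed.

Lemma first_hull w b : is_first Z w b -> H w.
Proof.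
move=> [ws [Fb [Fws <-]]]; apply: (sub_flatten hull_sub) => t.
by rewrite inE => /orP [/eqP ->|/Fws [] //]; case: Fb.
Qed.

Lemma first_nonnil w b : is_first Z w b -> w <> [::].
Proof. by move=> [ws [[_ [bn _]] [_ <-]]] /=; case: b bn. Qed.

Lemma FB_surj y : FB Z y -> exists z, Z z /\ is_first Z z y.
Proof.
move=> Fy; apply: NNPP => Hn.
pose M' w := H w /\ ~ is_first Z w y.
have firstcat : forall u v, H u -> H v -> u <> [::] -> is_first Z (u ++ v) y -> is_first Z u y.
  move=> u v Hu Hv un fy; case: (first_exists Hu un) => b fb.
  by rewrite (first_uniq fy (first_cat fb Hv)).
have sM' : submonoid M'.
  split; first by split; [case: hull_sub|move/first_nonnil].
  move=> u v [Hu nu] [Hv nv]; split; first by case: hull_sub => _; apply.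
  case: (classic (u = [::])) => [-> //|un] fy; apply: nu; exact: firstcat fy.
have stM' : stable M'.
  move=> u v w [Hu _] [Huv _] [Hw _] [Hvw nvw]; split.
    exact: (hull_stable Hu Huv Hw).
  case: (classic (v = [::])) => [-> /first_nonnil //|vn fv]; apply: nvw.
  exact: first_cat.
have fM' := stable_free sM' stM'.
have ZM' : forall z, Z z -> M' z.
  by move=> z Zz; split; [exact: hull_Z|move=> fz; apply: Hn; exists z].
case: (Fy) => Hy _.
by case: (Hy M' fM' ZM') => _; apply; apply: first_self.
Qed.

End Hull.

Lemma morph_cat (A S : Type) (f : A -> seq S) r r' :
  morph f (r ++ r') = morph f r ++ morph f r'.
Proof. by rewrite /morph map_cat flatten_cat. Qed.

Lemma morph_nil (A S : Type) (f : A -> seq S) r :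
  (forall i, f i <> [::]) -> morph f r = [::] -> r = [::].
Proof. case: r => // a r fn /=; rewrite /morph /=; by case: (f a) (fn a). Qed.

Lemma lcp_split (A : eqType) (r r' : seq A) : exists r1 r1',
  r = lcp r r' ++ r1 /\ r' = lcp r r' ++ r1' /\
  (first r1 <> first r1' \/ (r1 = [::] /\ r1' = [::])).
Proof.
elim: r r' => [|a r IH] [|a' r'] /=.
- by exists [::], [::]; do 2!split=> //; right.
- by exists [::], (a' :: r'); do 2!split=> //; left.
- by exists (a :: r), [::]; do 2!split=> //; left.
case: eqP => [<-|ne].
  case: (IH r') => r1 [r1' [e1 [e2 D]]]; exists r1, r1'.
  by rewrite /= -e1 -e2.
by exists (a :: r), (a' :: r'); split=> //; split=> //; left => /= [[]].
Qed.

Section Main.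
Variable S : eqType.
Variable Z : seq S -> Prop.
Local Notation H := (free_hull Z).
Variable A : eqType.

Lemma hull_morph (f : A -> seq S) r : (forall i, H (f i)) -> H (morph f r).
Proof.
move=> Hf; elim: r => [|a r IH] /=; first by case: (hull_sub Z).
by case: (hull_sub Z) => _; apply.
Qed.

Lemma first_morph (f : A -> seq S) a r b : (forall i, H (f i)) ->
  is_first Z (f a) b -> is_first Z (morph f (a :: r)) b.
Proof. by move=> Hf fb; apply: first_cat => //; apply: hull_morph. Qed.

Lemma marked_first (f : A -> seq S) a : marked Z f -> f a <> [::] ->
  exists b, is_first Z (f a) b.
Proof. by move=> [Hf _] fn; apply: first_exists. Qed.

Lemma marked_inj (f : A -> seq S) r r' : marked Z f -> (forall i, f i <> [::]) ->
  morph f r = morph f r' -> r = r'.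
Proof.
move=> mf fn; elim: r r' => [|a r IH] r'.
  by move/esym/(morph_nil fn) ->.
case: r' => [|a' r'].
  by move/(morph_nil fn).
move=> E; have Hf := mf.1.
case: (eqVneq a a') => [ea|ne].
  subst a'; congr (_ :: _); apply: IH; exact: (cancel_l E).
case: (marked_first mf (fn a)) => b fb; case: (marked_first mf (fn a')) => b' fb'.
have := first_morph r Hf fb; rewrite E => /(first_uniq (first_morph r' Hf fb')) eb.
by case: (mf.2 a a' ne b b' fb fb').
Qed.

Lemma no_overflow (f1 f2 : A -> seq S) x y x1 x2 y1 y2 p :
  marked Z f1 -> (forall i, f1 i <> [::]) -> (forall i, H (f2 i)) ->
  morph f2 y = morph f1 x ++ p -> p <> [::] ->
  morph f1 x ++ morph f1 x1 = morph f2 y ++ morph f2 y1 ->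
  morph f1 x ++ morph f1 x2 = morph f2 y ++ morph f2 y2 ->
  (first x1 <> first x2 \/ (x1 = [::] /\ x2 = [::])) -> False.
Proof.
move=> mf fn Hf2 E0 pn E1 E2 D; have Hf1 := mf.1.
rewrite E0 -catA in E1; rewrite E0 -catA in E2; move/cancel_l: E1 => E1; move/cancel_l: E2 => E2.
have Hp : H p.
  apply: (hull_stable (u:=morph f1 x) (w:=morph f2 y1)); rewrite -?E0 -?E1;
  exact: hull_morph.
have x1n : x1 <> [::] by move=> e; move: E1; rewrite e; case: (p) pn.
have x2n : x2 <> [::] by move=> e; move: E2; rewrite e; case: (p) pn.
case: x1 x2 E1 E2 D x1n x2n => [|a t1] [|a' t2] // E1 E2 D _ _.
have ne : a != a'.
  by apply/eqP => e; case: D => [/=|[]//]; rewrite e.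
case: (first_exists Hp pn) => b fb.
case: (marked_first mf (fn a)) => ba fa; case: (marked_first mf (fn a')) => ba' fa'.
have e1 : ba = b.
  apply: (first_uniq (first_morph t1 Hf1 fa)); rewrite E1.
  by apply: first_cat => //; apply: hull_morph.
have e2 : ba' = b.
  apply: (first_uniq (first_morph t2 Hf1 fa')); rewrite E2.
  by apply: first_cat => //; apply: hull_morph.
by apply: (mf.2 a a' ne ba ba' fa fa'); rewrite e1 e2.
Qed.

End Main.

Lemma P3 (j b b' x : 'I_3) : b != b' -> j != b -> j != b' -> [|| x == b, x == b' | x == j].
Proof.
by case: j => [[|[|[|?]]] ?] //; case: b => [[|[|[|?]]] ?] //; case: b' => [[|[|[|?]]] ?] //;
  case: x => [[|[|[|?]]] ?].
Qed.

Lemma codom_uniq3 (T : eqType) (g : 'I_3 -> T) : injective g -> uniq (codom g).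
Proof. move=> gi. by rewrite /codom /image_mem map_inj_uniq // enum_uniq. Qed.

Lemma FB_irred (S : eqType) (Z : seq S -> Prop) y ws :
  FB Z y -> (forall t, t \in ws -> free_hull Z t /\ t <> [::]) -> flatten ws = y -> y \in ws.
Proof.
move=> [Hy [yn By]] Hws; case: ws Hws => [|t ws] Hws /=; first by move=> e; rewrite -e in yn.
have [Ht tn] := Hws t (mem_head _ _).
have Hr : free_hull Z (flatten ws).
  apply: (sub_flatten (hull_sub Z)) => z zin.
  by case: (Hws z); rewrite // inE zin orbT.
move=> e; case: (By t (flatten ws) Ht Hr e) => // fn.
have wn : ws = [::].
  case: ws Hws fn {Hr e} => // z ws Hws /=.
  case: (Hws z); first by rewrite !inE eqxx orbT.
  by case: z {Hws}.
by move: e; rewrite wn /= cats0 => ->; rewrite inE eqxx.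
Qed.
Unset Implicit Arguments. Set Strict Implicit. Set Printing Implicit Defensive.

Theorem proposition4p5 (S : countType) (g h : 'I_3 -> seq S) :
  injective g -> injective h ->
  (forall i, g i <> [::]) -> (forall i, h i <> [::]) ->
  ~ (codom g =i codom h) ->
  k_maximal 3 (gen (codom g)) ->
  k_maximal 3 (gen (codom h)) ->
  let Z := fun w : seq S => w \in codom g \/ w \in codom h in
  marked Z g ->
  forall r s r' s' : seq 'I_3,
    minimal_solution g h r s -> minimal_solution g h r' s' ->
    (r, s) <> (r', s') ->
    let u := lcp r r' in
    let v := lcp s s' in
    exists o : seq S,
      morph g u = morph h v ++ o /\
      critical_overflow g h o u v /\
      (marked Z h <-> o = [::]).
Proof.
move=> gi hi gn hn neq mX mU Z mg r s r' s' ms ms' rs u v.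
have Hg : forall i, free_hull Z (g i) by move=> i; apply: hull_Z; left; exact: codom_f.
have Hh : forall i, free_hull Z (h i) by move=> i; apply: hull_Z; right; exact: codom_f.
case: (ms) => [[rn [sn Ers]] nms]; case: (ms') => [[rn' [sn' Ers']] nms'].
case: (lcp_split r r') => r1 [r1' [er [er' Dr]]].
case: (lcp_split s s') => s1 [s1' [es [es' Ds]]].
rewrite -/u in er er'; rewrite -/v in es es'.
have Eq1 : morph g u ++ morph g r1 = morph h v ++ morph h s1.
  by rewrite -!morph_cat -er -es.
have Eq2 : morph g u ++ morph g r1' = morph h v ++ morph h s1'.
  by rewrite -!morph_cat -er' -es'.
have ss : s <> s'.
  move=> e; apply: rs; have : r = r'.
    by apply: (marked_inj mg gn); rewrite Ers Ers' e.
  by move=> ->; rewrite e.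
have Ds' : first s1 <> first s1'.
  case: Ds => // [[e1 e2]]; by case: ss; rewrite es es' e1 e2.
have [o Eo] : exists o, morph g u = morph h v ++ o.
  case: (cat_split Eq1) => [[t [et _]]|[t [et _]]]; last by exists t.
  case: (classic (t = [::])) => [tn|tn]; first by exists [::]; rewrite et tn !cats0.
  by case: (no_overflow mg gn Hh et tn Eq1 Eq2 Dr).
exists o; split=> //; split.
  split=> //.
  case: Dr => [Dr|[e1 e2]].
    exists r1, r1', s1, s1'; split=> //; split=> //.
    by rewrite !morph_cat Eq1 Eq2.
  have s1n : s1 <> [::].
    move=> e; apply: Ds'; move: Eq1 Eq2; rewrite e1 e2 e /= !cats0 => E1.
    rewrite E1 -{1}(cats0 (morph h v)) => /cancel_l /esym /(morph_nil hn) ->.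
    by [].
  have s1n' : s1' <> [::].
    move=> e; apply: Ds'; move: Eq1 Eq2; rewrite e1 e2 e /= !cats0 => E1 E2.
    move: E1; rewrite E2 -{1}(cats0 (morph h v)) => /cancel_l /esym /(morph_nil hn) ->.
    by [].
  exists [::], r, s1, (s1' ++ s); split; first by case: (r) rn.
  split; first by case: (s1') s1n' Ds' => // c t _ /=.
  have eu : morph g u = morph g r by rewrite er e1 cats0.
  have eu' : morph g u = morph h s' by rewrite -Ers' er' e2 cats0.
  split; first by rewrite cats0 morph_cat -Eq1 e1 /= cats0.
  by rewrite !morph_cat catA -(morph_cat h v) -es' -Ers' -Ers er' e2 cats0.
split.
  move=> mh; apply: NNPP => on.
  exact: (no_overflow mh hn Hg Eo on (esym Eq1) (esym Eq2) Ds).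
move=> oe; rewrite oe cats0 in Eo.
have key : forall r0 s0 r2 s2, r0 = u ++ r2 -> s0 = v ++ s2 -> minimal_solution g h r0 s0 ->
    morph g u ++ morph g r2 = morph h v ++ morph h s2 -> u <> [::] -> v <> [::] ->
    r2 = [::] /\ s2 = [::].
  move=> r0 s0 r2 s2 e0 f0 [_ nm] E un vn.
  have E' : morph g r2 = morph h s2 by apply: (@cancel_l _ (morph g u)); rewrite E Eo.
  case: (classic (r2 = [::])) => [r2n|r2n].
    by split=> //; apply: (morph_nil hn); rewrite -E' r2n.
  case: (classic (s2 = [::])) => [s2n|s2n].
    by split=> //; apply: (morph_nil gn); rewrite E' s2n.
  case: nm; exists u, v; split.
    rewrite /proper_prefix e0 prefix_prefix size_cat /= -{1}(addn0 (size u)) ltn_add2l.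
    by rewrite lt0n size_eq0; apply/eqP.
  split; last by [].
  rewrite /proper_prefix f0 prefix_prefix size_cat /= -{1}(addn0 (size v)) ltn_add2l.
  by rewrite lt0n size_eq0; apply/eqP.
have un : u = [::].
  apply: NNPP => un.
  have vn : v <> [::].
    by move=> ve; apply: un; apply: (morph_nil gn); rewrite Eo ve.
  case: (key r s r1 s1 er es ms Eq1 un vn) => e1 e2.
  case: (key r' s' r1' s1' er' es' ms' Eq2 un vn) => e1' e2'.
  by apply: ss; rewrite es es' e2 e2'.
have vn : v = [::] by apply: (morph_nil hn); rewrite -Eo un.
rewrite un /= in er er'; rewrite vn /= in es es'.
clear Eq1 Eq2 Ds key.
case: Dr => [Dr|[e1 _]]; last by rewrite er e1 in rn.
case: r1 r1' er er' Dr => [|a ta] [|a' ta'] er er' Dr; rewrite ?er ?er' in rn rn'; try done.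
case: s1 s1' es es' Ds' => [|b tb] [|b' tb'] es es' Ds''; rewrite ?es ?es' in sn sn'; try done.
have aa : a != a' by apply/eqP => e; apply: Dr; rewrite e.
have bb : b != b' by apply/eqP => e; apply: Ds''; rewrite e.
have /fin_all_exists [be Hbe] k : exists bb, is_first Z (g k) bb := marked_first mg (gn k).
have FBbe : forall k, FB Z (be k) by move=> k; case: (Hbe k) => ws [].
have bene : forall k k', k != k' -> be k <> be k'.
  by move=> k k' ne; apply: (mg.2 k k' ne).
have hfirst : forall c k r0 s0, morph g (k :: r0) = morph h (c :: s0) -> is_first Z (h c) (be k).
  move=> c k r0 s0 E; case: (first_exists (Hh c) (hn c)) => gam fg.
  have := first_morph s0 Hh fg; rewrite -E => /(first_uniq (first_morph r0 Hg (Hbe k))) ->.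
  exact: fg.
have hb : is_first Z (h b) (be a) by apply: (hfirst _ _ ta tb); rewrite -er -es.
have hb' : is_first Z (h b') (be a') by apply: (hfirst _ _ ta' tb'); rewrite -er' -es'.
split=> [i|i1 i2 ne c1 c2 f1 f2 ec]; first exact: Hh.
rewrite -ec in f2.
have allbe : forall j, exists k, is_first Z (h j) (be k).
  move=> j; case: (eqVneq j b) => [->|jb]; first by exists a.
  case: (eqVneq j b') => [->|jb']; first by exists a'.
  case/or3P: (P3 i1 bb jb jb') => /eqP ei1; case/or3P: (P3 i2 bb jb jb') => /eqP ei2;
    rewrite ?ei1 ?ei2 in ne f1 f2.
  - by rewrite eqxx in ne.
  - by case: (bene _ _ aa); rewrite -(first_uniq f1 hb) -(first_uniq f2 hb').
  - by exists a; rewrite (first_uniq f1 hb) in f2.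
  - by case: (bene _ _ aa); rewrite -(first_uniq f1 hb') -(first_uniq f2 hb).
  - by rewrite eqxx in ne.
  - by exists a'; rewrite (first_uniq f1 hb') in f2.
  - by exists a; rewrite (first_uniq f2 hb) in f1.
  - by exists a'; rewrite (first_uniq f2 hb') in f1.
  - by rewrite eqxx in ne.
have FBsub : forall y, FB Z y -> exists k, y = be k.
  move=> y /FB_surj [z [[/codomP [k ->]|/codomP [j ->]] fz]].
    by exists k; apply: (first_uniq fz).
  by case: (allbe j) => k fk; exists k; apply: (first_uniq fz).
have genH : forall w, free_hull Z w -> gen (codom be) w.
  move=> w Hw; case: (factor_exists (hull_sub Z) Hw) => ws [B F].
  exists ws; split=> //; apply/allP => t tin.
  by case: (FBsub t (B t tin)) => k ->; apply: codom_f.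
have hullg : forall w, gen (codom g) w -> free_hull Z w.
  move=> w [ws [al <-]]; apply: (sub_flatten (hull_sub Z)) => t tin.
  by move/allP: al => /(_ t tin) /codomP [k ->].
have hullh : forall w, gen (codom h) w -> free_hull Z w.
  move=> w [ws [al <-]]; apply: (sub_flatten (hull_sub Z)) => t tin.
  by move/allP: al => /(_ t tin) /codomP [k ->].
have szbe : size (codom be) <= 3 by rewrite size_codom card_ord.
have genbe : forall k, gen (codom be) (be k).
  by move=> k; exists [:: be k]; split; [rewrite /= codom_f|rewrite /= cats0].
have beg : forall k, be k \in codom g.
  move=> k; case: (mX.2 _ szbe (fun w Hw => genH w (hullg w Hw)) _ (genbe k)) => ws [al F].
  move/allP: al => al; apply: (al); apply: FB_irred (FBbe k) _ F => t /al /codomP [i ->].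
  by split; [apply: Hg|apply: gn].
have beh : forall k, be k \in codom h.
  move=> k; case: (mU.2 _ szbe (fun w Hw => genH w (hullh w Hw)) _ (genbe k)) => ws [al F].
  move/allP: al => al; apply: (al); apply: FB_irred (FBbe k) _ F => t /al /codomP [i ->].
  by split; [apply: Hh|apply: hn].
have gk : forall k, g k = be k.
  move=> k; case/codomP: (beg k) => k' ek; case: (eqVneq k' k) => [e|ne']; first by rewrite ek e.
  by case: (mg.2 k' k ne' (be k) (be k)); rewrite // -ek; apply: first_self.
apply: neq; case: (uniq_min_size (s2:=codom h) (codom_uniq3 gi)) => //.
  by move=> t /codomP [k ->]; rewrite gk.
by rewrite !size_codom.
Qed.
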